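(* Let $q$ be a power of an odd prime, $d\ge 1$, and $E\subset\mathbb{F}_q^d$. If $|E|>\frac{q^d-1}{q-1}+1$, then $E$ contains three distinct collinear points. If moreover $d$ is even, then already $|E|>\frac{q^d-1}{q-1}$ implies that $E$ contains three distinct collinear points.
   Context: A line in $\mathbb{F}_q^d$ is a set $\{u+rv: r\in\mathbb{F}_q\}$ with $u,v\in\mathbb{F}_q^d$, $v\neq0$; points are collinear if they lie on a common line. *)

(* Defs.v *)
From HB Require Import structures.
From mathcomp Require Import all_boot all_order all_algebra all_field.
Set Implicit Arguments. Unset Strict Implicit. Unset Printing Implicit Defensive.
Import GRing.Theory.
Local Open Scope ring_scope.

Definition collinear (F : finFieldType) (d : nat) (x y z : 'rV[F]_d) : Prop :=
  exists (u v : 'rV[F]_d), v != 0 /\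
    exists (a b c : F), x = u + a *: v /\ y = u + b *: v /\ z = u + c *: v.

Definition has_three_collinear (F : finFieldType) (d : nat) (E : {set 'rV[F]_d}) : Prop :=
  exists (x y z : 'rV[F]_d),
    [/\ x \in E, y \in E, z \in E,
        [/\ x != y, y != z & x != z] & collinear x y z].

(* Main.v *)
Require Import Defs.
From HB Require Import structures.
From mathcomp Require Import all_boot all_order all_algebra all_field.
From Stdlib Require Import Classical.
Set Implicit Arguments. Unset Strict Implicit. Unset Printing Implicit Defensive.
Import GRing.Theory.

Section Aux.
Variables (F : finFieldType) (d : nat).
Local Open Scope ring_scope.

Lemma col3 (E : {set 'rV[F]_d}) x y z (w : 'rV[F]_d) (b c : F) :
  ~ has_three_collinear E -> x \in E -> y \in E -> z \in E ->
  x != y -> y != z -> x != z -> w != 0 ->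
  y = x + b *: w -> z = x + c *: w -> False.
Proof.
move=> nc xE yE zE nxy nyz nxz w0 ey ez; apply: nc.
exists x, y, z; split=> //.
exists x, w; split=> //; exists 0, b, c; split=> //.
by rewrite scale0r addr0.
Qed.

Definition fmap (x : 'rV[F]_d) (p : 'rV[F]_d * F) := p.2 *: (p.1 - x).

Lemma fmap_inj (E : {set 'rV[F]_d}) x :
  ~ has_three_collinear E -> x \in E ->
  {in setX (E :\ x) [set~ (0:F)] &, injective (fmap x)}.
Proof.
move=> nc xE [y1 c1] [y2 c2]; rewrite !inE /fmap /=.
case/andP=> /andP[ny1 y1E] c10 /andP[/andP[ny2 y2E] c20] e.
have w0 : y1 - x != 0 by rewrite subr_eq0.
have w2 : y2 - x != 0 by rewrite subr_eq0.
have e2 : y2 = x + (c1 / c2) *: (y1 - x).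
  by rewrite mulrC -scalerA e scalerA mulVf // scale1r addrC subrK.
have [ey|ney] := eqVneq y1 y2.
  rewrite -ey in e *; congr (_, _).
  move/eqP: e; rewrite -subr_eq0; rewrite -scalerBl scaler_eq0 (negbTE w0) orbF.
  by rewrite subr_eq0 => /eqP.
exfalso; apply: (@col3 E x y1 y2 (y1 - x) 1 _ nc xE y1E y2E _ ney _ w0 _ e2).
all: try by rewrite eq_sym.
all: by rewrite scale1r addrC subrK.
Qed.

Lemma fmap_sub (E : {set 'rV[F]_d}) x :
  [set fmap x p | p in setX (E :\ x) [set~ (0:F)]] \subset [set~ 0].
Proof.
apply/subsetP=> v /imsetP[[y c] /setXP[]]; rewrite !inE /fmap /= => /andP[ny _] c0 ->.
by rewrite scaler_eq0 negb_or c0 subr_eq0.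
Qed.

Lemma bound (E : {set 'rV[F]_d}) x :
  ~ has_three_collinear E -> x \in E ->
  (#|E :\ x| * (#|F| - 1) <= #|F| ^ d - 1)%N.
Proof.
move=> nc xE.
have := subset_leq_card (fmap_sub E x).
rewrite (card_in_imset (fmap_inj nc xE)) cardsX cardsC1 cardsC1 card_mx mul1n.
by rewrite !subn1.
Qed.

End Aux.
Local Open Scope ring_scope.

Lemma N_eq (q d : nat) : (1 < q)%N ->
  ((q ^ d - 1) %/ (q - 1) = \sum_(i < d) q ^ i)%N.
Proof.
move=> q1; rewrite !subn1 predn_exp mulKn //.
by rewrite -ltnS prednK // ltnW.
Qed.

Lemma odd_sumX (q d : nat) : odd q -> odd (\sum_(i < d) q ^ i) = odd d.
Proof.
move=> oq; elim: d => [|d IH]; first by rewrite big_ord0.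
by rewrite big_ord_recr /= oddD IH oddX oq orbT; case: (odd d).
Qed.


Lemma even_card (F : finFieldType) (d : nat) (E : {set 'rV[F]_d.+1}) :
  ~ has_three_collinear E ->
  (forall x, x \in E ->
     [set fmap x p | p in setX (E :\ x) [set~ (0:F)]] = [set~ 0]) ->
  ~~ odd #|E|.
Proof.
move=> nc Him.
pose v : 'rV[F]_d.+1 := const_mx 1.
have v0 : v != 0.
  apply/eqP=> /matrixP /(_ ord0 ord0); rewrite !mxE => /eqP.
  by rewrite oner_eq0.
pose R x y := [&& y \in E, y != x & [exists c : F, y - x == c *: v]].
have Rex : forall x, x \in E -> exists y, R x y.
  move=> x xE.
  have : v \in [set fmap x p | p in setX (E :\ x) [set~ (0:F)]].
    by rewrite Him // !inE.
  case/imsetP=> [[y c]] /setXP[]; rewrite !inE /fmap /= => /andP[ny yE] c0 ev.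
  exists y; rewrite /R yE ny /=; apply/existsP; exists c^-1.
  by rewrite ev scalerA mulVf // scale1r.
have Runi : forall x y z, x \in E -> R x y -> R x z -> y = z.
  move=> x y z xE /and3P[yE nyx /existsP[b /eqP eb]] /and3P[zE nzx /existsP[c /eqP ec]].
  apply/eqP; apply/negPn/negP => nyz.
  apply: (@col3 _ _ E x y z v b c nc xE yE zE _ nyz _ v0).
  - by rewrite eq_sym.
  - by rewrite eq_sym.
  - by rewrite -eb addrC subrK.
  - by rewrite -ec addrC subrK.
have Rsym : forall x y, x \in E -> R x y -> R y x.
  move=> x y xE /and3P[yE nyx /existsP[b /eqP eb]].
  rewrite /R xE eq_sym nyx /=; apply/existsP; exists (- b).
  by rewrite scaleNr -eb opprB.
pose p x := odflt x [pick y | R x y].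
have pR : forall x, x \in E -> R x (p x).
  move=> x xE; rewrite /p; case: pickP => [y //|none].
  by have [y Ry] := Rex x xE; rewrite none in Ry.
have pE : forall x, x \in E -> p x \in E.
  by move=> x xE; case/and3P: (pR x xE).
have pn : forall x, x \in E -> p x != x.
  by move=> x xE; case/and3P: (pR x xE).
have pp : forall x, x \in E -> p (p x) = x.
  move=> x xE; apply: (Runi (p x)); first exact: pE.
    exact: pR (pE x xE).
  exact: Rsym (pR x xE).
pose P := [set x | (enum_rank x < enum_rank (p x))%N].
have eB : E :\: P = p @: (E :&: P).
  apply/setP=> y; apply/idP/idP.
  - rewrite !inE => /andP[nP yE]; apply/imsetP; exists (p y); last by rewrite pp.
    rewrite !inE pE // pp //.
    have: enum_rank y != enum_rank (p y).
      by apply/negP=> /eqP /enum_rank_inj /esym /eqP; apply/negP; exact: pn.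
    by rewrite neq_ltn (negbTE nP).
  - case/imsetP=> x; rewrite !inE => /andP[xP xE] ->.
    by rewrite pE // pp // andbT -leqNgt ltnW.
have inj : {in E :&: P &, injective p}.
  move=> x y; rewrite !inE => /andP[xE _] /andP[yE _] e.
  by rewrite -(pp x xE) e pp.
rewrite -(cardsID P E) eB (card_in_imset inj) addnn odd_double //.
Qed.

Theorem mainTheorem11 (F : finFieldType) (d : nat) (E : {set 'rV[F]_d}) :
  odd #|F| -> (1 <= d)%N ->
  (((#|F| ^ d - 1) %/ (#|F| - 1)).+1 < #|E| -> has_three_collinear E)%N /\
  (~~ odd d -> (#|F| ^ d - 1) %/ (#|F| - 1) < #|E| -> has_three_collinear E)%N.
Proof.
move=> oF; case: d E => [//|d'] E d1.
have q1 := finNzRing_gt1 F.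
set N := ((#|F| ^ d'.+1 - 1) %/ (#|F| - 1))%N.
have eN : (N * (#|F| - 1) = #|F| ^ d'.+1 - 1)%N.
  by rewrite /N N_eq // !subn1 predn_exp mulnC.
have q0 : (0 < #|F| - 1)%N by rewrite subn_gt0.
have Hsub : forall x, x \in E -> ~ has_three_collinear E -> (#|E :\ x| <= N)%N.
  move=> x xE nc; have := bound nc xE; rewrite -eN leq_pmul2r //.
have Hle : ~ has_three_collinear E -> (#|E| <= N.+1)%N.
  move=> nc; have [E0|[x xE]] := set_0Vmem E.
    by rewrite E0 cards0.
  by rewrite (cardsD1 x) xE add1n ltnS Hsub.
split.
  move=> HN; apply: NNPP => nc; have := Hle nc; by rewrite leqNgt HN.
move=> ev HN; apply: NNPP => nc.
have eE : #|E| = N.+1 by apply/eqP; rewrite eqn_leq (Hle nc).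
have Him : forall x, x \in E ->
    [set fmap x p | p in setX (E :\ x) [set~ (0:F)]] = [set~ 0].
  move=> x xE; apply/eqP; rewrite eqEcard fmap_sub /=.
  rewrite (card_in_imset (fmap_inj nc xE)) cardsX cardsC1 cardsC1 card_mx mul1n.
  have : #|E :\ x| = N by move: eE; rewrite (cardsD1 x) xE add1n => -[].
  by move->; rewrite !subn1 in eN; rewrite eN.
have := @even_card F d' E nc Him.
rewrite eE /N N_eq // -[odd _.+1]/(~~ odd _) odd_sumX //.
by move: ev => /= ->.
Qed.
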